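(* Let $\sigma_X^2>0$, $\sigma_{N_1}^2,\dots,\sigma_{N_K}^2>0$, $D>0$, let $(r_1,\dots,r_K)\in\mathcal{F}(D)$, and let $\alpha_1\ge\alpha_2\ge\dots\ge\alpha_K\ge0$. Define, for $k=1,\dots,K$, $$R_k^\ast=r_k+\frac12\log\Big(\frac1{\sigma_X^2}+\sum_{i=k}^K\frac{1-e^{-2r_i}}{\sigma_{N_i}^2}\Big)-\frac12\log\Big(\frac1{\sigma_X^2}+\sum_{i=k+1}^K\frac{1-e^{-2r_i}}{\sigma_{N_i}^2}\Big)$$ (an empty sum being $0$). Then $(R_1^\ast,\dots,R_K^\ast)\in\mathcal{R}(r_1,\dots,r_K)$ and $\sum_{k=1}^K\alpha_kR_k^\ast\le\sum_{k=1}^K\alpha_kR_k'$ for every $(R_1',\dots,R_K')\in\mathcal{R}(r_1,\dots,r_K)$.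
   Context: Logarithms are natural. $\mathcal{K}=\{1,\dots,K\}$, $\mathcal{A}^c=\mathcal{K}\setminus\mathcal{A}$. $\mathcal{F}(D)=\{(r_1,\dots,r_K)\in\mathbb{R}_+^K:\ \sum_{k=1}^K\frac{1-e^{-2r_k}}{\sigma_{N_k}^2}=\frac1D\}$. For $(r_1,\dots,r_K)\in\mathbb{R}_+^K$, $\mathcal{R}(r_1,\dots,r_K)$ is the set of all $(R_1,\dots,R_K)$ such that for every $\mathcal{A}\subseteq\mathcal{K}$: $\sum_{k\in\mathcal{A}}R_k\ge\sum_{k\in\mathcal{A}}r_k+\frac12\log(\frac1{\sigma_X^2}+\frac1D)-\frac12\log(\frac1{\sigma_X^2}+\sum_{k\in\mathcal{A}^c}\frac{1-e^{-2r_k}}{\sigma_{N_k}^2})$. *)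

(* Defs.v *)
From HB Require Import structures.
From mathcomp Require Import all_boot all_order all_algebra.
From mathcomp Require Import all_classical all_reals all_analysis.
Set Implicit Arguments. Unset Strict Implicit. Unset Printing Implicit Defensive.
Import Order.TTheory GRing.Theory Num.Theory.
Local Open Scope ring_scope.

(* Indices k = 1..K are represented by 'I_K (k-1), order preserved. *)

Definition gterm {R : realType} {K : nat} (sN2 r : 'I_K -> R) (k : 'I_K) : R :=
  (1 - expR (- (2 * r k))) / sN2 k.

Definition inF {R : realType} {K : nat} (sN2 : 'I_K -> R) (D : R) (r : 'I_K -> R) : Prop :=
  (forall k, 0 <= r k) /\ \sum_(k < K) gterm sN2 r k = 1 / D.

Definition inRegion {R : realType} {K : nat} (sX2 : R) (sN2 : 'I_K -> R) (D : R)
  (r Rt : 'I_K -> R) : Prop :=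
  forall A : {set 'I_K},
    \sum_(k in A) r k + (ln (1 / sX2 + 1 / D)) / 2
      - (ln (1 / sX2 + \sum_(k in ~: A) gterm sN2 r k)) / 2
    <= \sum_(k in A) Rt k.

Definition Rstar {R : realType} {K : nat} (sX2 : R) (sN2 r : 'I_K -> R) (k : 'I_K) : R :=
  r k + (ln (1 / sX2 + \sum_(i < K | (k <= i)%N) gterm sN2 r i)) / 2
      - (ln (1 / sX2 + \sum_(i < K | (k < i)%N) gterm sN2 r i)) / 2.

(* Main.v *)
Require Import Defs.
From HB Require Import structures.
From mathcomp Require Import all_boot all_order all_algebra.
From mathcomp Require Import all_classical all_reals all_analysis.
From mathcomp Require Import lra.
Import Order.TTheory GRing.Theory Num.Theory.
Local Open Scope ring_scope.

Lemma abel_nat (R : realType) (n : nat) (a d : nat -> R) :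
  (forall i j, (i <= j)%N -> (j < n)%N -> a j <= a i) ->
  (forall k, (k < n)%N -> 0 <= a k) ->
  (forall j, (j < n)%N -> 0 <= \sum_(k < j.+1) d k) ->
  0 <= \sum_(k < n) a k * d k.
Proof.
move=> Ha Hp Hd.
case: n Ha Hp Hd => [|n] Ha Hp Hd; first by rewrite big_ord0.
have E : forall m, (m <= n)%N -> \sum_(k < m.+1) a k * d k =
   a m * (\sum_(k < m.+1) d k) +
   \sum_(j < m) (a j - a j.+1) * (\sum_(k < j.+1) d k).
  elim=> [|m IH] Hm.
    by rewrite !big_ord_recr !big_ord0 /=; lra.
  rewrite big_ord_recr /= IH ?(ltnW Hm) //.
  rewrite [X in _ = _ * X + _]big_ord_recr /=.
  rewrite [X in _ = _ + X]big_ord_recr /=.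
  lra.
rewrite E //.
apply: addr_ge0.
  by apply: mulr_ge0; [apply: Hp | apply: Hd].
apply: sumr_ge0 => j _.
apply: mulr_ge0; last by apply: Hd; apply: ltn_trans (ltn_ord j) _.
rewrite subr_ge0; apply: Ha => //.
by rewrite ltnS ltn_ord.
Qed.

Lemma ln_dimin (R : realType) (a b g : R) :
  0 < a -> a <= b -> 0 <= g ->
  ln (g + b) - ln b <= ln (g + a) - ln a.
Proof.
move=> a0 ab g0.
have b0 : 0 < b by apply: lt_le_trans ab.
have ag : 0 < a + g by lra.
have bg : 0 < b + g by lra.
suff : ln (a * (b + g)) <= ln (b * (a + g)).
  by rewrite ![g + _]addrC !lnM ?posrE //; lra.
rewrite ler_ln ?posrE ?mulr_gt0 //.
have : a * g <= b * g by rewrite ler_wpM2r.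
rewrite !mulrDr; lra.
Qed.

Theorem lemma1 (R : realType) (K : nat) (sX2 : R) (sN2 : 'I_K -> R) (D : R)
  (r alpha : 'I_K -> R) :
  0 < sX2 -> (forall k, 0 < sN2 k) -> 0 < D ->
  inF sN2 D r ->
  (forall i j : 'I_K, (i <= j)%N -> alpha j <= alpha i) ->
  (forall k, 0 <= alpha k) ->
  inRegion sX2 sN2 D r (Rstar sX2 sN2 r) /\
  (forall Rp : 'I_K -> R, inRegion sX2 sN2 D r Rp ->
     \sum_(k < K) alpha k * Rstar sX2 sN2 r k <= \sum_(k < K) alpha k * Rp k).
Proof.
move=> hX hN hD [hr hsum] ha hpa.
set g := gterm sN2 r.
have g0 : forall k, 0 <= g k.
  move=> k; rewrite /g /gterm; apply: divr_ge0; last exact: ltW.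
  rewrite subr_ge0 expR_le1; have := hr k; lra.
have S0 : forall P : pred 'I_K, 0 < 1 / sX2 + \sum_(k | P k) g k.
  move=> P; apply: lt_le_trans (_ : 1 / sX2 <= _).
    by rewrite divr_gt0.
  by rewrite lerDl sumr_ge0.
have hall : \sum_(k in ~: (finset.set0 : {set 'I_K})) g k = 1 / D.
  by rewrite -hsum; apply: eq_bigl => k; rewrite !inE.
split.
  suff H : forall n (A : {set 'I_K}), (forall i, i \in A -> (i < n)%N) ->
    \sum_(k in A) r k + (ln (1 / sX2 + 1 / D)) / 2
      - (ln (1 / sX2 + \sum_(k in ~: A) g k)) / 2
    <= \sum_(k in A) Rstar sX2 sN2 r k.
    by move=> A; apply: (H K) => i _; apply: ltn_ord.
  elim=> [|n IH] A HA.
    have -> : A = finset.set0.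
      apply/setP => i; rewrite !inE; apply/negbTE/negP => /HA //.
    by rewrite !big_set0 hall; lra.
  case: (boolP [exists i in A, val i == n]) => [/existsP [i /andP [iA /eqP iv]]|].
    set A' := A :\ i.
    have HA' : forall j, j \in A' -> (j < n)%N.
      move=> j; rewrite !inE => /andP [ji jA].
      have := HA j jA; rewrite ltnS leq_eqVlt => /orP [/eqP jn|//].
      by exfalso; move/negP: ji; apply; apply/eqP/val_inj; rewrite /= jn iv.
    have H := IH A' HA'.
    have eA : forall F : 'I_K -> R, \sum_(k in A | k != i) F k = \sum_(k in A') F k.
      by move=> F; apply: eq_bigl => k; rewrite !inE andbC.
    have eC : \sum_(k in ~: A') g k = g i + \sum_(k in ~: A) g k.
      rewrite (bigD1 i) /=; last by rewrite !inE eqxx.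
      congr (_ + _); apply: eq_bigl => k; rewrite !inE.
      case: (eqVneq k i) => [->|] /=; [by rewrite iA | by rewrite andbT].
    have eG : \sum_(i0 < K | (i <= i0)%N) g i0 = g i + \sum_(i0 < K | (i < i0)%N) g i0.
      rewrite (bigD1 i) //=; congr (_ + _); apply: eq_bigl => k.
      by rewrite ltn_neqAle andbC eq_sym.
    have le : \sum_(i0 < K | (i < i0)%N) g i0 <= \sum_(k in ~: A) g k.
      rewrite [X in X <= _]big_mkcond [X in _ <= X]big_mkcond /=.
      apply: ler_sum => k _.
      case: ifP => ik; last by case: ifP.
      rewrite ifT //; rewrite !inE; apply/negP => kA.
      by have := HA k kA; rewrite ltnS -iv leqNgt ik.
    have le2 : 1 / sX2 + \sum_(i0 < K | (i < i0)%N) g i0 <= 1 / sX2 + \sum_(k in ~: A) g k.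
      by rewrite lerD2l.
    have key := @ln_dimin R _ _ _ (S0 (fun i0 => (i < i0)%N)) le2 (g0 i).
    rewrite -!(addrCA (1 / sX2) (g i)) -eC -eG in key.
    rewrite (bigD1 i iA) [X in _ <= X](bigD1 i iA) /= !eA.
    move: H key; rewrite /Rstar -/g eC eG.
    lra.
  rewrite negb_exists => /forallP Hn.
  apply: IH => i iA.
  have := HA i iA; rewrite ltnS leq_eqVlt => /orP [/eqP e|//].
  by exfalso; move: (Hn i); rewrite iA /= => /negP; apply; apply/eqP; exact: e.
move=> Rp HRp.
rewrite -subr_ge0 -sumrB.
under eq_bigr do rewrite -mulrBr.
pose ext (f : 'I_K -> R) (n : nat) : R :=
  match insub n with Some i => f i | None => 0 end.
have extE : forall f (i : 'I_K), ext f i = f i.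
  by move=> f i; rewrite /ext valK.
have -> : \sum_(k < K) alpha k * (Rp k - Rstar sX2 sN2 r k) =
   \sum_(k < K) ext alpha k * ext (fun k => Rp k - Rstar sX2 sN2 r k) k.
  by apply: eq_bigr => k _; rewrite !extE.
apply: abel_nat.
- move=> i j ij jK.
  have iK : (i < K)%N by apply: leq_ltn_trans ij jK.
  have -> : i = val (Ordinal iK) by [].
  have -> : j = val (Ordinal jK) by [].
  by rewrite !extE; apply: ha.
- by move=> k kK; have -> : k = val (Ordinal kK) by []; rewrite extE.
move=> j jK.
rewrite (big_ord_widen _ _ jK).
have -> : \sum_(i < K | (i < j.+1)%N) ext (fun k => Rp k - Rstar sX2 sN2 r k) i
   = \sum_(i in [set i : 'I_K | (i <= j)%N]) (Rp i - Rstar sX2 sN2 r i).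
  by apply: eq_big => i; rewrite ?inE ?ltnS // => _; rewrite extE.
rewrite sumrB subr_ge0.
apply: le_trans (HRp _).
set A := [set i : 'I_K | (i <= j)%N].
pose phi (m : nat) := ln (1 / sX2 + \sum_(i0 < K | (m <= i0)%N) g i0) / 2.
have -> : \sum_(k in A) Rstar sX2 sN2 r k =
   \sum_(k in A) r k + \sum_(k in A) (phi k - phi k.+1).
  rewrite -big_split /=; apply: eq_bigr => k _.
  rewrite /Rstar /phi; lra.
have -> : \sum_(k in A) (phi k - phi k.+1) = \sum_(k < j.+1) (phi k - phi k.+1).
  rewrite (big_ord_widen K (fun k : nat => phi k - phi k.+1) jK); apply: eq_bigl => k; by rewrite !inE ltnS.
rewrite -(big_mkord xpredT (fun k => phi k - phi k.+1)).
have -> : \sum_(0 <= k < j.+1) (phi k - phi k.+1) = - \sum_(0 <= k < j.+1) (phi k.+1 - phi k).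
  by rewrite -sumrN; apply: eq_bigr => k _; lra.
rewrite telescope_sumr // /phi.
have -> : \sum_(i0 < K | (0 <= i0)%N) g i0 = 1 / D by rewrite -hsum.
have -> : \sum_(i0 < K | (j.+1 <= i0)%N) g i0 = \sum_(k in ~: A) g k.
  by apply: eq_bigl => k; rewrite !inE -ltnNge.
lra.
Qed.
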